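(* Let $r,s,t,a,b,c$ be real numbers with $t\neq0$, and let $H_n^{(3)}$ and $h_n^{(3)}$ be the third-order Horadam and generalized Tribonacci numbers defined in the context. Then for every integer $n\ge0$, $$\big(H_{n+2}^{(3)}\big)^{2}+s\big(H_{n+1}^{(3)}\big)^{2}+2tH_{n}^{(3)}H_{n+1}^{(3)}=(c^{2}+sb^{2}+2tab)h_{2n+1}^{(3)}+\big(b^{2}(t-rs)+2tac+2sbc-2rtab\big)h_{2n}^{(3)}+t(ta^{2}-rb^{2}+2bc)h_{2n-1}^{(3)}$$ $$=cH_{2n+2}^{(3)}+(sb+ta)H_{2n+1}^{(3)}+tbH_{2n}^{(3)}.$$
   Context: Third-order Horadam numbers: $H_0^{(3)}=a$, $H_1^{(3)}=b$, $H_2^{(3)}=c$, $H_{n+3}^{(3)}=rH_{n+2}^{(3)}+sH_{n+1}^{(3)}+tH_n^{(3)}$ for $n\ge0$. Generalized Tribonacci numbers: $h_0^{(3)}=0$, $h_1^{(3)}=1$, $h_2^{(3)}=r$, $h_{n+3}^{(3)}=rh_{n+2}^{(3)}+sh_{n+1}^{(3)}+th_n^{(3)}$ for $n\ge0$; the value $h_{-1}^{(3)}$ (needed for $n=0$) is obtained by running the recurrence backwards, giving $h_{-1}^{(3)}=0$. *)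

(* Defs.v *)
From Stdlib Require Import Reals.
Open Scope R_scope.

Fixpoint horadam3 (r s t a b c : R) (n : nat) {struct n} : R :=
  match n with
  | 0%nat => a
  | 1%nat => b
  | 2%nat => c
  | S ((S (S m as q)) as p) =>
      r * horadam3 r s t a b c p + s * horadam3 r s t a b c q
      + t * horadam3 r s t a b c m
  end.

(* tribS r s t k = h_{k-1}^(3): the generalized Tribonacci sequence shifted
   by one so that the backwards value h_{-1} = 0 is included:
   h_{-1}=0, h_0=0, h_1=1, h_2=r, and the recurrence holds from h_{-1} on. *)
Fixpoint tribS (r s t : R) (k : nat) {struct k} : R :=
  match k with
  | 0%nat => 0
  | 1%nat => 0
  | 2%nat => 1
  | S ((S (S m as q)) as p) =>
      r * tribS r s t p + s * tribS r s t q + t * tribS r s t m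
  end.

Definition trib3 (r s t : R) (n : nat) : R := tribS r s t (S n).

(* h_{n-1}^(3) for n >= 0 (with h_{-1} = 0) *)
Definition trib3_pred (r s t : R) (n : nat) : R := tribS r s t n.

(* Main.v *)
Require Import Defs.
From Stdlib Require Import Reals Lra Lia.
Open Scope R_scope.

Definition isrec (r s t : R) (X : nat -> R) :=
  forall m, X (m + 3)%nat = r * X (m + 2)%nat + s * X (m + 1)%nat + t * X m.

Lemma H_isrec r s t a b c : isrec r s t (horadam3 r s t a b c).
Proof. intro m. replace (m+3)%nat with (S (S (S m))) by lia.
  replace (m+2)%nat with (S (S m)) by lia. replace (m+1)%nat with (S m) by lia.
  reflexivity. Qed.

Lemma T_isrec r s t : isrec r s t (tribS r s t).
Proof. intro m. replace (m+3)%nat with (S (S (S m))) by lia.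
  replace (m+2)%nat with (S (S m)) by lia. replace (m+1)%nat with (S m) by lia.
  reflexivity. Qed.

Definition Q (s t : R) (X Y : nat -> R) m k :=
  X (m+2)%nat * Y (k+2)%nat + X (m+1)%nat * (s * Y (k+1)%nat + t * Y k)
  + t * X m * Y (k+1)%nat.

Lemma Q_shift r s t X Y : isrec r s t X -> isrec r s t Y ->
  forall m k, Q s t X Y (S m) k = Q s t X Y m (S k).
Proof.
  intros HX HY m k. unfold Q.
  replace (S m + 2)%nat with (m+3)%nat by lia.
  replace (S m + 1)%nat with (m+2)%nat by lia.
  replace (S m)%nat with (m+1)%nat by lia.
  replace (S k + 2)%nat with (k+3)%nat by lia.
  replace (S k + 1)%nat with (k+2)%nat by lia.
  replace (S k)%nat with (k+1)%nat by lia.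
  rewrite HX, HY. ring.
Qed.

Lemma Q_zero r s t X Y : isrec r s t X -> isrec r s t Y ->
  forall m k, Q s t X Y m k = Q s t X Y 0 (m + k).
Proof.
  intros HX HY m. induction m as [|m IH]; intro k.
  - reflexivity.
  - rewrite (Q_shift r s t X Y HX HY), IH. f_equal. lia.
Qed.

Lemma L r s t a b c j : forall k,
  horadam3 r s t a b c (k + j)%nat =
  horadam3 r s t a b c j * tribS r s t (k+2)%nat
  + (horadam3 r s t a b c (j+1)%nat - r * horadam3 r s t a b c j) * tribS r s t (k+1)%nat
  + (horadam3 r s t a b c (j+2)%nat - r * horadam3 r s t a b c (j+1)%nat
     - s * horadam3 r s t a b c j) * tribS r s t k.
Proof.
  set (H := horadam3 r s t a b c). set (T := tribS r s t).
  assert (HH := H_isrec r s t a b c). assert (HT := T_isrec r s t).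
  fold H in HH. fold T in HT.
  set (P := fun k => H (k + j)%nat =
    H j * T (k+2)%nat + (H (j+1)%nat - r * H j) * T (k+1)%nat
    + (H (j+2)%nat - r * H (j+1)%nat - s * H j) * T k).
  assert (G : forall k, P k /\ P (k+1)%nat /\ P (k+2)%nat).
  { induction k as [|k [I1 [I2 I3]]].
    - unfold P; simpl; unfold T; simpl.
      replace (j+1)%nat with (1+j)%nat by lia.
      replace (j+2)%nat with (2+j)%nat by lia. simpl. repeat split; ring.
    - replace (S k) with (k+1)%nat by lia. split; [exact I2|split].
      + replace (k+1+1)%nat with (k+2)%nat by lia. exact I3.
      + unfold P in *. replace (k+1+2)%nat with (k+3)%nat by lia.
        replace (k+3+j)%nat with ((k+j)+3)%nat by lia. rewrite HH.
        replace (k+j+2)%nat with (k+2+j)%nat by lia.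
        replace (k+j+1)%nat with (k+1+j)%nat by lia.
        rewrite I1, I2, I3.
        replace (k+3+2)%nat with ((k+2)+3)%nat by lia.
        replace (k+3+1)%nat with ((k+1)+3)%nat by lia.
        rewrite !HT.
        replace (k+2+2)%nat with (k+1+3)%nat by lia.
        replace (k+1+2)%nat with (k+3)%nat by lia.
        replace (k+2+1)%nat with (k+3)%nat by lia.
        replace (k+1+1)%nat with (k+2)%nat by lia.
        rewrite !HT. ring. }
  intro k. apply G.
Qed.

Theorem corollary3p5 (r s t a b c : R) (ht : t <> 0) (n : nat) :
  let H := horadam3 r s t a b c in
  let h := trib3 r s t in
  (H (n + 2)%nat) ^ 2 + s * (H (n + 1)%nat) ^ 2 + 2 * t * H n * H (n + 1)%nat
  = (c ^ 2 + s * b ^ 2 + 2 * t * a * b) * h (2 * n + 1)%nat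
    + (b ^ 2 * (t - r * s) + 2 * t * a * c + 2 * s * b * c - 2 * r * t * a * b)
      * h (2 * n)%nat
    + t * (t * a ^ 2 - r * b ^ 2 + 2 * b * c) * trib3_pred r s t (2 * n)%nat
  /\
  (H (n + 2)%nat) ^ 2 + s * (H (n + 1)%nat) ^ 2 + 2 * t * H n * H (n + 1)%nat
  = c * H (2 * n + 2)%nat + (s * b + t * a) * H (2 * n + 1)%nat
    + t * b * H (2 * n)%nat.
Proof.
  intros H h.
  assert (E2 : (H (n + 2)%nat) ^ 2 + s * (H (n + 1)%nat) ^ 2 + 2 * t * H n * H (n + 1)%nat
    = c * H (2 * n + 2)%nat + (s * b + t * a) * H (2 * n + 1)%nat
      + t * b * H (2 * n)%nat).
  { assert (HQ := Q_zero r s t H H (H_isrec r s t a b c) (H_isrec r s t a b c) n n).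
    unfold Q in HQ. simpl (0+2)%nat in HQ. simpl (0+1)%nat in HQ.
    replace (n+n)%nat with (2*n)%nat in HQ by lia.
    replace (H 2%nat) with c in HQ by reflexivity.
    replace (H 1%nat) with b in HQ by reflexivity.
    replace (H 0%nat) with a in HQ by reflexivity.
    lra. }
  split; [|exact E2]. rewrite E2.
  unfold h, trib3, trib3_pred.
  replace (S (2*n+1)) with (2*n+2)%nat by lia.
  replace (S (2*n)) with (2*n+1)%nat by lia.
  unfold H.
  assert (L0 := L r s t a b c 0 (2*n)). rewrite Nat.add_0_r in L0.
  rewrite (L r s t a b c 2 (2*n)), (L r s t a b c 1 (2*n)), L0.
  simpl (2+1)%nat. simpl (2+2)%nat. simpl (1+1)%nat. simpl (1+2)%nat.
  simpl (0+1)%nat. simpl (0+2)%nat. simpl. ring.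
Qed.
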